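(* Consider $2$ agents with additive, normalized (not necessarily identical) valuations, and online algorithms without access to predictions. For any given $a\in(0,1]$, there is no online algorithm that guarantees an $a$-EFX allocation, even if the time horizon $T$ is known to the algorithm in advance.
   Context: Online fair division model: there is a set $N=[n]$ of agents and goods $g_1,\dots,g_T$ arriving one per time step. Each agent $i$ has an additive normalized valuation $v_i$ ($v_i(g_t)\ge0$, $\sum_{t=1}^T v_i(g_t)=1$, $v_i(S)=\sum_{g\in S}v_i(g)$). When $g_t$ arrives, the values $v_i(g_t)$ of all agents are revealed and $g_t$ must be immediately and irrevocably allocated to one agent. For a bundle $S\ne\emptyset$ and valuation $f$, $\bar S^f=S\setminus\{g\}$ with $g\in\arg\max_{g'\in S}f(S\setminus\{g'\})$, and $\bar\emptyset^f=\emptyset$. For $a\in[0,1]$, an allocation $(A_1,\dots,A_n)$ is $a$-EFX if $v_i(A_i)\ge a\cdot v_i(\bar{A_j}^{v_i})$ for all $i,j$. An algorithm guarantees an $a$-EFX allocation if for every admissible input the final allocation is $a$-EFX with respect to the true valuations. *)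

(* Defs.v *)
From mathcomp Require Import all_boot all_order all_algebra.
From mathcomp Require Import reals.
Set Implicit Arguments. Unset Strict Implicit. Unset Printing Implicit Defensive.
Import Order.TTheory GRing.Theory Num.Theory.
Local Open Scope ring_scope.

Section OnlineFairDivision.
Variables (R : realType) (n T : nat).

(* An input: v i t = value of good g_{t+1} (t = 0, ..., T-1) for agent i. *)
Definition instance := 'I_n -> nat -> R.

Definition admissible (v : instance) : Prop :=
  (forall (i : 'I_n) (t : 'I_T), 0 <= v i t) /\
  (forall i : 'I_n, \sum_(t < T) v i t = 1).

Definition val (v : instance) (i : 'I_n) (S : {set 'I_T}) : R :=
  \sum_(t in S) v i t.

Definition bar (f : {set 'I_T} -> R) (S : {set 'I_T}) : {set 'I_T} :=
  match [pick g in S] with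
  | Some g0 => S :\ Order.arg_max g0 (fun g => g \in S) (fun g => f (S :\ g))
  | None => set0
  end.

Definition aEFX (a : R) (v : instance) (A : 'I_n -> {set 'I_T}) : Prop :=
  forall i j : 'I_n, val v i (A i) >= a * val v i (bar (val v i) (A j)).

(* A (deterministic) online algorithm for horizon T: when good t arrives, it
   sees the values of all goods 0..t for all agents (the history) and outputs
   the agent receiving good t. *)
Definition online_alg := seq ('I_n -> R) -> 'I_n.

Definition history (v : instance) (t : nat) : seq ('I_n -> R) :=
  mkseq (fun s => fun i => v i s) t.+1.

Definition run (alg : online_alg) (v : instance) : 'I_n -> {set 'I_T} :=
  fun j => [set t : 'I_T | alg (history v t) == j].

End OnlineFairDivision.

(* Main.v *)
Require Import Defs.
From mathcomp Require Import all_boot all_order all_algebra.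
From mathcomp Require Import reals.
From mathcomp Require Import ring lra.
From Stdlib Require Import FunctionalExtensionality.
Import Order.TTheory GRing.Theory Num.Theory.
Local Open Scope ring_scope.

Set Implicit Arguments. Unset Strict Implicit.

Lemma bar_ge (R : realType) (T n : nat) (v : instance R n) (i : 'I_n)
  (S : {set 'I_T}) (h : 'I_T) :
  h \in S -> Defs.val v i (S :\ h) <= Defs.val v i (bar (Defs.val v i) S).
Proof.
move=> hS; rewrite /bar; case: pickP => [g0 g0S|/(_ h)]; last by rewrite hS.
case: (@arg_maxP _ _ _ g0 (fun g => g \in S) (fun g => Defs.val v i (S :\ g)) g0S).
by move=> g _ H; apply: H.
Qed.

Lemma val_le1 (R : realType) (T n : nat) (v : instance R n) (i : 'I_n)
  (S : {set 'I_T}) (t0 : 'I_T) :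
  (forall t : 'I_T, 0 <= v i t) ->
  (forall t : 'I_T, t \in S -> t != t0 -> v i t = 0) ->
  Defs.val v i S <= v i t0.
Proof.
move=> h0 hz; rewrite /Defs.val; case: (boolP (t0 \in S)) => Ht0.
  rewrite (bigD1 t0) //= big1 ?addr0 // => t /andP[tS tt0]; exact: hz.
rewrite big1 ?h0 // => t tS; apply: hz => //; by apply: contraNneq Ht0 => <-.
Qed.

Lemma val_ge1 (R : realType) (T n : nat) (v : instance R n) (i : 'I_n)
  (S : {set 'I_T}) (t0 : 'I_T) :
  (forall t : 'I_T, 0 <= v i t) -> t0 \in S -> v i t0 <= Defs.val v i S.
Proof.
move=> h0 Ht0; rewrite /Defs.val (bigD1 t0) //= lerDl; apply: sumr_ge0 => t _; exact: h0.
Qed.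

Lemma val_D1 (R : realType) (T n : nat) (v : instance R n) (i : 'I_n)
  (S : {set 'I_T}) (t0 : 'I_T) :
  t0 \in S -> Defs.val v i S = v i t0 + Defs.val v i (S :\ t0).
Proof.
move=> Ht0; rewrite /Defs.val (bigD1 t0) //=; congr (_ + _).
by apply: eq_bigl => t; rewrite in_setD1 andbC.
Qed.

Lemma val_part (R : realType) (T n : nat) (v : instance R n) (i : 'I_n)
  (A B : {set 'I_T}) :
  (forall t, (t \in B) = (t \notin A)) ->
  \sum_(t < T) v i t = Defs.val v i A + Defs.val v i B.
Proof.
move=> hB; rewrite /Defs.val (bigID (fun t => t \in A)) /=; congr (_ + _).
by apply: eq_bigl => t; rewrite hB.
Qed.

Lemma I2_cases (i j k : 'I_2) : i != j -> k = i \/ k = j.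
Proof.
case: i j k => [[|[|//]] ?] [[|[|//]] ?] [[|[|//]] ?] //= _;
  by [left; apply: val_inj | right; apply: val_inj].
Qed.

Definition vA (R : realType) (m s t : nat) : R :=
     (if t == 0%N then 0 else if (t <= s)%N then (m%:R)^-1
      else if t == s.+1 then 1 - s%:R / m%:R else 0).
Definition vinst (R : realType) (m : nat) (i0 : 'I_2) (s : nat) : instance R 2 :=
  fun k t => if k == i0 then vA R m s t
   else (if t == s.+1 then 1 else 0).

Lemma vinst_ge0 (R : realType) m i0 s k t : (0 < m)%N -> (s <= m)%N ->
  0 <= vinst R m i0 s k t.
Proof.
move=> m0 sm; rewrite /vinst /vA.
have mpos : 0 < (m%:R : R) by rewrite ltr0n.
case: (k == i0); last by case: (t == s.+1).
case: (t == 0%N) => //; case: (t <= s)%N; first by rewrite invr_ge0 ltW.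
case: (t == s.+1) => //.
rewrite subr_ge0 ler_pdivrMr // mul1r ler_nat //.
Qed.

Lemma vinst_adm (R : realType) m i0 s : (0 < m)%N -> (s <= m)%N ->
  admissible m.+2 (vinst R m i0 s).
Proof.
move=> m0 sm; split => [i t|k]; first exact: vinst_ge0.
have mpos : (m%:R : R) != 0 by rewrite pnatr_eq0 -lt0n.
rewrite /vinst; case: (k == i0); last first.
  have hs : (s.+1 < m.+2)%N by rewrite ltnS ltnS.
  rewrite (bigD1 (Ordinal hs)) //= eqxx big1 ?addr0 // => t ht.
  by rewrite ifN //; apply: contraNneq ht => e; apply/eqP/val_inj.
rewrite -(big_mkord xpredT (fun t => vA R m s t)).
  rewrite big_ltn //= (big_cat_nat _ (n := s.+1)) //=; last by rewrite ltnS ltnW.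
  rewrite (@big_ltn _ _ _ s.+1) ?ltnS //.
  have -> : \sum_(1 <= i < s.+1) vA R m s i = \sum_(1 <= i < s.+1) (m%:R : R)^-1.
    apply: eq_big_nat => t /andP[t1 ts]; rewrite /vA -(ltnS t) ts.
    by case: t t1 {ts}.
  have -> : \sum_(s.+2 <= i < m.+2) vA R m s i = 0.
    rewrite big1_seq // => t /andP[_]; rewrite mem_iota => /andP[t1 _].
    rewrite /vA; case: t t1 => //= t t1.
    by move: t1; rewrite ltnS => t1; rewrite ltnNge (ltnW t1) /= eqSS gtn_eqF.
  rewrite big_const_nat iter_addr_0 /vA /= eqxx ltnn subn1 /=.
  by rewrite -mulr_natr; field.
Qed.

Lemma hist_eq (R : realType) m i0 s t : (t <= s)%N -> (s <= m)%N ->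
  history (vinst R m i0 s) t = history (vinst R m i0 m) t.
Proof.
move=> ts sm; rewrite /history /mkseq; apply/eq_in_map => u.
rewrite mem_iota add0n ltnS => /andP[_ ut].
apply: functional_extensionality => k; rewrite /vinst.
have us : (u <= s)%N by apply: leq_trans ts.
have um : (u <= m)%N by apply: leq_trans sm.
case: (k == i0); first by rewrite /vA; case: (u == 0%N); rewrite // us um.
by rewrite !ltn_eqF // ltnS.
Qed.

Lemma run_in (R : realType) T (alg : online_alg R 2) v j (t : 'I_T) :
  (t \in run T alg v j) = (alg (history v t) == j).
Proof. by rewrite /run inE. Qed.

Lemma run_part (R : realType) T (alg : online_alg R 2) v (i j : 'I_2) (t : 'I_T) :
  i != j -> (t \in run T alg v j) = (t \notin run T alg v i).
Proof.
move=> ij; rewrite !run_in.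
have ji : j != i by rewrite eq_sym.
by case: (I2_cases (alg (history v t)) ij) => ->; rewrite eqxx ?(negbTE ij) ?(negbTE ji).
Qed.

Lemma viol_gen (R : realType) T (v : instance R 2) (alg : online_alg R 2)
  (a b : R) (i j : 'I_2) (z : 'I_T) :
  0 < a -> admissible T v -> i != j -> z \in run T alg v j -> v i z = 0 ->
  Defs.val v i (run T alg v i) <= b -> b < a * (1 - b) ->
  ~ aEFX a v (run T alg v).
Proof.
move=> a0 [h0 h1] ij zA vz hb hab H.
have Hij := H i j.
have tot : \sum_(t < T) v i t = Defs.val v i (run T alg v i) + Defs.val v i (run T alg v j).
  by apply: val_part => t; apply: run_part.
rewrite h1 in tot.
have hD := val_D1 v i zA; rewrite vz add0r in hD.
have hbar := bar_ge v i zA.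
have : 1 - b <= Defs.val v i (bar (Defs.val v i) (run T alg v j)).
  rewrite -hD in hbar; apply: le_trans hbar; rewrite tot; lra.
move=> hge.
have : a * (1 - b) <= a * Defs.val v i (bar (Defs.val v i) (run T alg v j)).
  by rewrite ler_pM2l.
move: Hij; lra.
Qed.

Lemma hist0 (R : realType) m i0 i1 s s' :
  history (vinst R m i0 s) 0 = history (vinst R m i1 s') 0.
Proof.
rewrite /history /mkseq /=; congr [:: _].
by apply: functional_extensionality => k; rewrite /vinst /vA; case: (k == i0); case: (k == i1).
Qed.

Unset Implicit Arguments. Set Strict Implicit.

Theorem theorem3p4 (R : realType) (a : R) (ha : 0 < a) (ha1 : a <= 1)
  (alg : forall T : nat, online_alg R 2) :
  exists (T : nat) (v : instance R 2),
    admissible T v /\ ~ aEFX a v (run T (alg T) v).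
Proof.
have [m hm] : exists m : nat, 1 + a^-1 < m%:R.
  exists (Num.bound (1 + a^-1)); apply: archi_boundP.
  by rewrite addr_ge0 // invr_ge0 ltW.
have ainv : 0 < a^-1 by rewrite invr_gt0.
have m1 : (1 < m)%N by rewrite -(ltr_nat R); lra.
have m0 : (0 < m)%N by apply: ltn_trans m1.
have mpos : 0 < (m%:R : R) by rewrite ltr0n.
have key : (m%:R)^-1 < a * (1 - (m%:R)^-1).
  have h1 : 1 < a * (m%:R - 1).
    have : a * a^-1 < a * (m%:R - 1) by rewrite ltr_pM2l //; lra.
    by rewrite mulfV ?gt_eqF.
  have -> : a * (1 - (m%:R)^-1) = a * (m%:R - 1) / m%:R.
    by field; rewrite gt_eqF.
  by rewrite -[X in X < _]mul1r ltr_pM2r ?invr_gt0.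
set T := m.+2.
set j0 := alg T (history (vinst R m ord0 m) 0).
set i0 : 'I_2 := if j0 == ord0 then ord_max else ord0.
have ij : i0 != j0.
  rewrite /i0; case: (j0 =P ord0) => [->|/eqP]; first by [].
  by rewrite eq_sym.
have ji : j0 != i0 by rewrite eq_sym.
have dec0 : forall s, alg T (history (vinst R m i0 s) 0) = j0.
  by move=> s; rewrite (hist0 R m i0 ord0 s m).
set W := vinst R m i0 m.
have hmT : (m.+1 < T)%N by rewrite /T.
case: (boolP [exists t : 'I_m.+1, (0 < t)%N && (alg T (history W t) == i0)]).
  move=> hex.
  pose P := fun n : nat => (0 < n <= m)%N && (alg T (history W n) == i0).
  have exP : exists n, P n.
    case/existsP: hex => t /andP[t0 ht]; exists t; rewrite /P t0 -ltnS ltn_ord /=.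
    exact: ht.
  case: (ex_minnP exP) => s /andP[/andP[s0 sm] hs] smin.
  pose V := vinst R m i0 s.
  have hV : forall t, (t <= s)%N -> history V t = history W t.
    by move=> t ts; apply: hist_eq.
  have decs : alg T (history V s) = i0 by rewrite hV //; apply/eqP.
  have declt : forall t, (0 < t < s)%N -> alg T (history V t) = j0.
    move=> t /andP[t0 ts]; rewrite hV; last exact: ltnW.
    case: (I2_cases (alg T (history W t)) ij) => // e.
    have : P t by rewrite /P t0 e eqxx (ltnW (leq_trans ts sm)).
    by move/smin; rewrite leqNgt ts.
  have hsT : (s < T)%N by rewrite /T ltnS ltnW.
  have hs1T : (s.+1 < T)%N by rewrite /T !ltnS.
  exists T, V; split; first exact: vinst_adm.
  case: (I2_cases (alg T (history V s.+1)) ij) => dF.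
  -
    move=> H; have := H j0 i0.
    have own : Defs.val V j0 (run T (alg T) V j0) <= 0.
      apply: le_trans (val_le1 (t0 := ord0) _ _) _.
      + by move=> t; apply: vinst_ge0.
      + move=> t; rewrite run_in => ht tn0.
        rewrite /V /vinst (negbTE ji).
        case: eqP => // e; move: ht.
        by rewrite (_ : t = Ordinal hs1T) ?dF ?(negbTE ij) //; apply: val_inj.
      + by rewrite /V /vinst (negbTE ji).
    have sA : Ordinal hsT \in run T (alg T) V i0 by rewrite run_in decs.
    have hb := bar_ge V j0 sA.
    have s1A : Ordinal hs1T \in run T (alg T) V i0 :\ Ordinal hsT.
      rewrite in_setD1 run_in dF eqxx andbT.
      by apply/negP => /eqP/(congr1 val) /= /eqP; rewrite gtn_eqF.
    have nn : forall t : 'I_T, 0 <= V j0 t by move=> t; apply: vinst_ge0.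
    have hv := val_ge1 nn s1A.
    move: hv; rewrite {1}/V /vinst (negbTE ji) /= eqxx => hv.
    have : a * 1 <= a * Defs.val V j0 (bar (Defs.val V j0) (run T (alg T) V i0)).
      by rewrite ler_pM2l //; apply: le_trans hb.
    lra.
  -
    apply: (viol_gen (b := (m%:R)^-1) (z := ord0) ha _ ij).
    + exact: vinst_adm.
    + by rewrite run_in dec0.
    + by rewrite /V /vinst eqxx /vA.
    + apply: le_trans (val_le1 (t0 := Ordinal hsT) _ _) _.
      * by move=> t; apply: vinst_ge0.
      * move=> t; rewrite run_in => ht tne.
        have tne' : (t != s :> nat).
          by apply: contra tne => /eqP e; apply/eqP/val_inj.
        rewrite /V /vinst eqxx /vA.
        case: (t =P 0%N :> nat) => [e|/eqP t0].
          by move: ht; rewrite (_ : t = ord0) ?dec0 ?(negbTE ji) //; apply: val_inj.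
        case: (ltngtP t s) => [tls|tgs|e]; last by rewrite e eqxx in tne'.
          by move: ht; rewrite declt ?(negbTE ji) // lt0n t0.
        case: eqP => // e; move: ht.
        by rewrite (_ : t = Ordinal hs1T) ?dF ?(negbTE ji) //; apply: val_inj.
      * by rewrite /V /vinst eqxx /vA /= leqnn gtn_eqF.
    + exact: key.
move=> hne; exists T, W; split; first exact: vinst_adm.
apply: (viol_gen (b := 0) (z := ord0) ha _ ij).
- exact: vinst_adm.
- by rewrite run_in dec0.
- by rewrite /W /vinst eqxx /vA.
- apply: le_trans (val_le1 (t0 := Ordinal hmT) _ _) _.
  + by move=> t; apply: vinst_ge0.
  + move=> t; rewrite run_in => ht tne.
    rewrite /W /vinst eqxx /vA.
    case: (t =P 0%N :> nat) => [e|/eqP t0].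
      by move: ht; rewrite (_ : t = ord0) ?dec0 ?(negbTE ji) //; apply: val_inj.
    case: (leqP t m) => [tm|tm].
      move/negP: hne; case; apply/existsP.
      have tm' : (t < m.+1)%N by [].
      exists (Ordinal tm') => /=; rewrite lt0n t0 /=.
      exact: ht.
    have -> : (t == m.+1 :> nat) = false.
      by apply/negbTE; apply: contra tne => /eqP e; apply/eqP/val_inj.
    by [].
  + by rewrite /W /vinst eqxx /vA /= ltnn eqxx divff ?subrr // gt_eqF.
- by rewrite subr0 mulr1.
Qed.
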